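(* Let $P$ be a bounded poset of finite length and $I\subset P$ a proper ideal. Then: (i) $P$ and $\mathrm{Bier}(P,I)$ have the same length $n$. (ii) $\mathrm{Bier}(P,I)$ is graded if and only if $P$ is graded; in that case the rank of an element $[x,y]\neq\hat1$ of $\mathrm{Bier}(P,I)$ is $\mathrm{rank}_P(x)+(n-\mathrm{rank}_P(y))$. (iii) For $[x,y]\in\mathrm{Bier}(P,I)$ one has $[[x,y],\hat1]\cong \mathrm{Bier}([x,y],I\cap[x,y])$, and for $[x',y']\le[x,y]$ in $\mathrm{Bier}(P,I)$ (i.e. $x'\le x<y\le y'$) one has $[[x',y'],[x,y]]\cong [x',x]\times[y,y']^{\mathrm{op}}$, where $[y,y']^{\mathrm{op}}$ is the interval $[y,y']$ of $P$ with the opposite order. (iv) If $P$ is a lattice, then $\mathrm{Bier}(P,I)$ is a lattice.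
   Context: All posets have finite length. A poset is bounded if it has a unique minimum $\hat0$ and maximum $\hat1$; it is graded if it is bounded and all maximal chains have the same length. An ideal of $P$ is a subset $I$ with $x\le y$, $y\in I$ implying $x\in I$; it is proper if $I\neq\emptyset$ and $I\neq P$ (so $\hat0\in I$, $\hat1\notin I$). For a bounded poset $P$ of finite length and a proper ideal $I$, the Bier poset $\mathrm{Bier}(P,I)$ consists of all intervals $[x,y]=\{z\in P: x\le z\le y\}$ of $P$ with $x\in I$ and $y\notin I$, ordered by reversed inclusion ($[x',y']\le[x,y]$ iff $x'\le x<y\le y'$), together with an additional top element $\hat1$. Its minimum is $[\hat0,\hat1]$. *)

(* Defs.v *)
(* Posets are handled "relationally": a poset is a carrier
   subset S : A -> Prop of a type A with an order relation le : A -> A -> Prop.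
   This lets us treat P, its intervals, opposite orders, products, and the
   Bier poset uniformly. *)
From HB Require Import structures.
From mathcomp Require Import all_boot all_order.
Set Implicit Arguments. Unset Strict Implicit. Unset Printing Implicit Defensive.
Import Order.TTheory.

Section RelPoset.
Variables (A : Type) (S : A -> Prop) (le : A -> A -> Prop).

Fixpoint inseq (z : A) (s : seq A) : Prop :=
  match s with [::] => False | y :: s' => z = y \/ inseq z s' end.

(* x :: s is a strictly increasing chain of elements of S (x itself in S
   is required separately); its length is size s. *)
Fixpoint chain_from (x : A) (s : seq A) : Prop :=
  match s with
  | [::] => True
  | y :: s' => [/\ le x y, x <> y, S y & chain_from y s']
  end.

Definition is_chain (x : A) (s : seq A) : Prop := S x /\ chain_from x s.

Definition finite_length : Prop :=
  exists n, forall x s, is_chain x s -> size s <= n.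

Definition has_length (n : nat) : Prop :=
  (exists x s, is_chain x s /\ size s = n) /\
  (forall x s, is_chain x s -> size s <= n).

Definition maximal_chain (x : A) (s : seq A) : Prop :=
  is_chain x s /\
  forall y t, is_chain y t ->
    (forall z, inseq z (x :: s) -> inseq z (y :: t)) ->
    (forall z, inseq z (y :: t) -> inseq z (x :: s)).

Definition bounded : Prop :=
  (exists b, S b /\ forall z, S z -> le b z) /\
  (exists t, S t /\ forall z, S z -> le z t).

Definition graded : Prop :=
  bounded /\
  forall x s y t, maximal_chain x s -> maximal_chain y t -> size s = size t.


Definition itv (a b : A) : A -> Prop := fun z => [/\ S z, le a z & le z b].

Definition is_lub (a b j : A) : Prop :=
  [/\ S j, le a j, le b j & forall u, S u -> le a u -> le b u -> le j u].
Definition is_glb (a b m : A) : Prop :=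
  [/\ S m, le m a, le m b & forall u, S u -> le u a -> le u b -> le u m].

Definition is_lattice : Prop :=
  forall a b, S a -> S b -> (exists j, is_lub a b j) /\ (exists m, is_glb a b m).

Definition is_ideal (I : A -> Prop) : Prop :=
  (forall z, S z -> I z -> S z) /\
  forall u v, S u -> S v -> le u v -> I v -> I u.
Definition proper_ideal (I : A -> Prop) : Prop :=
  (forall z, I z -> S z) /\ is_ideal I /\
  (exists z, S z /\ I z) /\ (exists z, S z /\ ~ I z).

(* Bier poset: intervals [x,y] (encoded as Some (x,y)) with x in I, y not in I,
   plus the extra top element None. *)
Definition BierS (I : A -> Prop) (o : option (A * A)) : Prop :=
  match o with
  | None => True
  | Some (x, y) => [/\ S x, S y, le x y, I x & ~ I y]
  end.

Definition BierLe (o1 o2 : option (A * A)) : Prop :=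
  match o1, o2 with
  | _, None => True
  | None, Some _ => False
  | Some (x', y'), Some (x, y) =>
      forall z, itv x y z -> itv x' y' z
  end.

End RelPoset.

Definition rank_is (A : Type) (S : A -> Prop) (le : A -> A -> Prop) (z : A) (r : nat) : Prop :=
  has_length (fun w => S w /\ le w z) le r.

Definition poset_iso (A B : Type) (S1 : A -> Prop) (le1 : A -> A -> Prop)
    (S2 : B -> Prop) (le2 : B -> B -> Prop) : Prop :=
  exists (f : A -> B) (g : B -> A),
    [/\ forall a, S1 a -> S2 (f a),
        forall b, S2 b -> S1 (g b),
        forall a, S1 a -> g (f a) = a,
        forall b, S2 b -> f (g b) = b &
        forall a a', S1 a -> S1 a' -> (le1 a a' <-> le2 (f a) (f a'))].

Definition PT (d : Order.disp_t) (T : tbPOrderType d) : T -> Prop := fun _ => True.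
Definition PLe (d : Order.disp_t) (T : tbPOrderType d) : T -> T -> Prop :=
  fun a b => (a <= b)%O.

Definition prodS (d : Order.disp_t) (T : tbPOrderType d) (x' x y y' : T)
  : T * T -> Prop :=
  fun p => itv (@PT d T) (@PLe d T) x' x p.1 /\ itv (@PT d T) (@PLe d T) y y' p.2.
Definition prodOpLe (d : Order.disp_t) (T : tbPOrderType d) (p q : T * T) : Prop :=
  (p.1 <= q.1)%O /\ (q.2 <= p.2)%O.

(* Main.v *)
Require Import Defs.
From mathcomp Require Import all_boot all_order.
From mathcomp Require Import zify.
Set Warnings "-notation-overridden".
From Stdlib Require Import Classical.
Set Implicit Arguments. Unset Strict Implicit. Unset Printing Implicit Defensive.
Import Order.TTheory.

Lemma nat_max (Pn : nat -> Prop) N : Pn 0 -> (forall k, Pn k -> k <= N) ->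
  exists n, Pn n /\ forall k, Pn k -> k <= n.
Proof.
move=> H0; elim: N => [|N IH] Hb; first by exists 0.
case: (classic (Pn N.+1)) => h; first by exists N.+1.
apply: IH => k hk; have := Hb k hk; rewrite leq_eqVlt; case/orP => [/eqP E|//].
by rewrite E in hk.
Qed.

Lemma inseq_cat A (w : A) s1 s2 : inseq w (s1 ++ s2) <-> inseq w s1 \/ inseq w s2.
Proof. elim: s1 => [|y s IH] /=; [tauto| rewrite IH; tauto]. Qed.

Lemma chain_sub A (S S' : A -> Prop) rl x s : chain_from S rl x s ->
  (forall w, inseq w s -> S' w) -> chain_from S' rl x s.
Proof.
elim: s x => //= y s IH x [a b c e] H; split => //; first by apply: H; left.
by apply: IH => // w hw; apply: H; right.
Qed.

Section Gen.
Variables (A : Type) (S : A -> Prop) (rl : A -> A -> Prop).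
Hypothesis rl_tr : forall x y z, rl x y -> rl y z -> rl x z.
Hypothesis rl_rf : forall x, S x -> rl x x.

Definition covers (a b : A) : Prop :=
  [/\ rl a b, a <> b, S b & forall z, S z -> rl a z -> rl z b -> z = a \/ z = b].

Fixpoint cpath (x : A) (s : seq A) : Prop :=
  match s with [::] => True | y :: s' => covers x y /\ cpath y s' end.

Lemma cpath_chain x s : cpath x s -> chain_from S rl x s.
Proof. elim: s x => [|y s IH] x //= [[h1 h2 h3 _] h]; split => //; exact: IH. Qed.

Lemma chain_cat x s1 s2 : chain_from S rl x (s1 ++ s2) <->
  chain_from S rl x s1 /\ chain_from S rl (last x s1) s2.
Proof.
elim: s1 x => [|y s1 IH] x /=; first by split => [h|[]].
move: (IH y) => H; split => [[a b c /H [e f]]|[[a b c e] f]]; split => //.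
by apply/H.
Qed.

Lemma cpath_cat x s1 s2 : cpath x (s1 ++ s2) <-> cpath x s1 /\ cpath (last x s1) s2.
Proof.
elim: s1 x => [|y s1 IH] x /=; first by split => [h|[]].
rewrite IH; tauto.
Qed.

Lemma chain_rcons x s z : chain_from S rl x (rcons s z) <->
  chain_from S rl x s /\ [/\ rl (last x s) z, last x s <> z & S z].
Proof.
rewrite -cats1 chain_cat /=; split => [[h [a b c _]]|[h [a b c]]]; split => //.
Qed.

Lemma cpath_rcons x s z : cpath x (rcons s z) <-> cpath x s /\ covers (last x s) z.
Proof. rewrite -cats1 cpath_cat /=; tauto. Qed.

Lemma chain_le x s w : chain_from S rl x s -> inseq w s -> rl x w.
Proof.
elim: s x => [|y s IH] x //= [a b c e] [->//|h].
exact: rl_tr a (IH y e h).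
Qed.

Lemma chain_S x s w : chain_from S rl x s -> inseq w s -> S w.
Proof.
elim: s x => [|y s IH] x //= [a b c e] [->//|h]; exact: IH e h.
Qed.

Lemma chain_last x s w : S x -> chain_from S rl x s -> inseq w (x :: s) -> rl w (last x s).
Proof.
elim: s x w => [|y s IH] x w Sx /=; first by move=> _ [->|[]]; exact: rl_rf.
move=> [a b c e] [->|h]; last exact: IH.
exact: rl_tr a (IH y y c e (or_introl erefl)).
Qed.

Lemma last_S x s : S x -> chain_from S rl x s -> S (last x s).
Proof. elim: s x => //= y s IH x Sx [_ _ c e]; exact: IH. Qed.

Lemma ins x s : chain_from S rl x s -> ~ cpath x s ->
  exists s', chain_from S rl x s' /\ size s' = (size s).+1 /\ last x s' = last x s.
Proof.
elim: s x => [|y s IH] x /= Hc Hn; first by case: Hn.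
case: Hc => a b c e.
case: (classic (covers x y)) => Hcov.
  have Hn' : ~ cpath y s by move=> h; apply: Hn.
  have [s' [h1 [h2 h3]]] := IH y e Hn'.
  by exists (y :: s'); split => //=; rewrite h2.
have [z Hz] : exists z, ~ (S z -> rl x z -> rl z y -> z = x \/ z = y).
  apply: not_all_ex_not => H; apply: Hcov; split => //.
have [Sz Hz1] := imply_to_and _ _ Hz.
have [h1 Hz2] := imply_to_and _ _ Hz1.
have [h2 Hz3] := imply_to_and _ _ Hz2.
have [n1 n2] := not_or_and _ _ Hz3.
exists [:: z, y & s]; split => //=.
split => //; first by move/esym.
Qed.

Lemma chain_comp y t u v : S y -> chain_from S rl y t -> inseq u (y::t) ->
  inseq v (y::t) -> rl u v \/ rl v u.
Proof.
elim: t y => [|z t IH] y Sy /=.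
  by move=> _ [->|[]] [->|[]]; left; exact: rl_rf.
move=> Hc; have [a b c e] := Hc.
move=> [->|hu] [->|hv].
- by left; exact: rl_rf.
- by left; exact: (@chain_le y (z::t) v Hc hv).
- by right; exact: (@chain_le y (z::t) u Hc hu).
- exact: IH c e hu hv.
Qed.

Hypothesis rl_an : forall x y, S x -> S y -> rl x y -> rl y x -> x = y.
Variables (bt tp : A).
Hypotheses (Sbt : S bt) (Stp : S tp) (bt_le : forall z, S z -> rl bt z)
  (le_tp : forall z, S z -> rl z tp).

Lemma max_bot x s : maximal_chain S rl x s -> x = bt.
Proof.
case=> [[Sx Hc] Hm].
case: (classic (x = bt)) => // Hne.
have Hc' : is_chain S rl bt (x :: s).
  split => //; split => //; [exact: bt_le | by move/esym].
have := Hm _ _ Hc' (fun z hz => or_intror hz) bt (or_introl erefl).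
case=> [->//|h].
exact (rl_an Sx Sbt (chain_le Hc h) (bt_le Sx)).
Qed.

Lemma max_top x s : maximal_chain S rl x s -> last x s = tp.
Proof.
case=> [[Sx Hc] Hm].
case: (classic (last x s = tp)) => // Hne.
have Hc' : is_chain S rl x (rcons s tp).
  split => //; apply/chain_rcons; split => //; split => //.
  exact: le_tp (last_S Sx Hc).
have Hsub : forall z, inseq z (x :: s) -> inseq z (x :: rcons s tp).
  move=> z [->|hz]; first by left.
  by right; rewrite -cats1; apply/inseq_cat; left.
have := Hm _ _ Hc' Hsub tp.
have Ht : inseq tp (x :: rcons s tp).
  by right; rewrite -cats1; apply/inseq_cat; right; left.
move=> /(_ Ht) h.
exact: rl_an (last_S Sx Hc) Stp (le_tp (last_S Sx Hc)) (chain_last Sx Hc h).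
Qed.

Lemma max_cov x s : maximal_chain S rl x s -> cpath x s.
Proof.
case=> [[Sx Hc] Hm].
suff H : forall s' pre, s = pre ++ s' -> cpath (last x pre) s' by exact: (H s [::]).
elim=> [|z s' IH] pre E //=.
have Hcs := Hc; rewrite E in Hcs; move/chain_cat: Hcs => [Hpre /= [h1 h2 h3 h4]].
split; last first.
  have E2 : s = rcons pre z ++ s' by rewrite E cat_rcons.
  by have := IH (rcons pre z) E2; rewrite last_rcons.
have SL := last_S Sx Hpre.
split => // w Sw hw1 hw2.
case: (classic (w = last x pre)) => [->|n1]; first by left.
case: (classic (w = z)) => [->|n2]; first by right.
exfalso.
have Hc2 : is_chain S rl x (pre ++ [:: w, z & s']).
  split => //; apply/chain_cat; split => //=; split => //; first by move/esym.
have Hsub : forall u, inseq u (x :: s) -> inseq u (x :: pre ++ [:: w, z & s']).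
  rewrite E => u /= [->|/inseq_cat [h|/= [->|h]]]; first by left.
  - by right; apply/inseq_cat; left.
  - by right; apply/inseq_cat; right; right; left.
  - by right; apply/inseq_cat; right; right; right.
have Hw : inseq w (x :: pre ++ [:: w, z & s']) by right; apply/inseq_cat; right; left.
have := Hm _ _ Hc2 Hsub w Hw.
have Hp : inseq w (x :: pre) -> False.
  move=> h; apply: n1; exact: rl_an Sw SL (chain_last Sx Hpre h) hw1.
rewrite E => /= [[E1|/inseq_cat [h|/= [E1|h]]]].
- by apply: Hp; left.
- by apply: Hp; right.
- by [].
- apply: n2; exact: rl_an Sw h3 hw2 (chain_le h4 h).
Qed.

Lemma walk x s w : cpath x s -> S x -> S w -> rl x w -> rl w (last x s) ->
  (forall u, inseq u s -> rl u w \/ rl w u) -> inseq w (x :: s).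
Proof.
elim: s x => [|c s IH] x /= Hp Sx Sw h1 h2 Hcmp.
  by left; exact: rl_an Sw Sx h2 h1.
case: Hp => [[a b Sc f] Hp'].
case: (Hcmp c (or_introl erefl)) => hc.
  by right; apply: IH => // u hu; apply: Hcmp; right.
by case: (f w Sw h1 hc) => ->; [left | right; left].
Qed.

Lemma max_of x s : cpath x s -> x = bt -> last x s = tp -> maximal_chain S rl x s.
Proof.
move=> Hp Ex El; have Hc := cpath_chain Hp.
split; first by split => //; rewrite Ex.
move=> y t [Sy Hct] Hsub w Hw.
have Sw : S w by case: Hw => [->//|h]; exact: chain_S Hct h.
apply: walk => //; first by rewrite Ex.
- by rewrite Ex; exact: bt_le.
- by rewrite El; exact: le_tp.
- by move=> u hu; exact: chain_comp Sy Hct (Hsub u (or_intror hu)) Hw.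
Qed.

End Gen.
Section Bier.
Variables (d : Order.disp_t) (T : tbPOrderType d) (J : T -> Prop).
Hypothesis HI : proper_ideal (@PT d T) (@PLe d T) J.
Local Notation PS := (@PT d T).
Local Notation PL := (@PLe d T).
Local Notation B := (BierS PS PL J).
Local Notation BL := (BierLe PS PL).
Local Notation bt := (@Order.bottom d T).
Local Notation tp := (@Order.top d T).

Lemma Idown (u v : T) : (u <= v)%O -> J v -> J u.
Proof. case: HI => _ [[_ H] _] h hv; exact: (H u v Logic.I Logic.I h hv). Qed.

Lemma I0 : J bt.
Proof. case: HI => _ [_ [[z [_ Hz]] _]]; exact: Idown (le0x z) Hz. Qed.

Lemma nI1 : ~ J tp.
Proof. case: HI => _ [_ [_ [z [_ Hz]]]] h; apply: Hz; exact: Idown (lex1 z) h. Qed.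

Lemma PL_tr x y z : PL x y -> PL y z -> PL x z.
Proof. exact: le_trans. Qed.
Lemma PL_rf x : PS x -> PL x x.
Proof. move=> _; exact: lexx. Qed.
Lemma PL_an x y : PS x -> PS y -> PL x y -> PL y x -> x = y.
Proof. rewrite /PLe => _ _ h1 h2; by apply/le_anti; rewrite h1 h2. Qed.

Lemma BLc (Sx : T -> Prop) a b a' b' : Sx a -> Sx b -> (a <= b)%O ->
  BierLe Sx PL (Some (a', b')) (Some (a, b)) <-> (a' <= a)%O /\ (b <= b')%O.
Proof.
move=> Sa Sb hab /=; split.
  move=> H; have [_ h1 _] := H a (And3 Sa (lexx a) hab).
  have [_ _ h2] := H b (And3 Sb hab (lexx b)); by split.
move=> [h1 h2] z [Sz hz1 hz2]; split => //; [exact: le_trans h1 hz1 | exact: le_trans hz2 h2].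
Qed.

Lemma BL_tr o1 o2 o3 : BL o1 o2 -> BL o2 o3 -> BL o1 o3.
Proof.
case: o1 => [[a1 b1]|]; case: o2 => [[a2 b2]|]; case: o3 => [[a3 b3]|] //=.
move=> h1 h2 z hz; exact: h1 z (h2 z hz).
Qed.

Lemma BL_rf o : B o -> BL o o.
Proof. by case: o => [[a b]|] //= _ z. Qed.

Lemma BL_an o1 o2 : B o1 -> B o2 -> BL o1 o2 -> BL o2 o1 -> o1 = o2.
Proof.
case: o1 => [[a1 b1]|]; case: o2 => [[a2 b2]|] //= [_ _ h1 _ _] [_ _ h2 _ _].
move=> /(@BLc PS a2 b2 a1 b1 Logic.I Logic.I h2) [e1 e2].
move=> /(@BLc PS a1 b1 a2 b2 Logic.I Logic.I h1) [e3 e4].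
have -> : a1 = a2 by apply/le_anti; rewrite e1 e3.
have -> : b1 = b2 by apply/le_anti; rewrite e2 e4.
by [].
Qed.

Lemma B_bot : B (Some (bt, tp)).
Proof. split; [exact: Logic.I|exact: Logic.I|exact: le0x|exact: I0|exact: nI1]. Qed.

Lemma BL_bot o : B o -> BL (Some (bt, tp)) o.
Proof.
case: o => [[a b] [_ _ hab _ _]|] //.
apply/(@BLc PS a b _ _ Logic.I Logic.I hab); split; [exact: le0x | exact: lex1].
Qed.

Lemma BL_top o : B o -> BL o None.
Proof. by case: o => [[a b]|]. Qed.

Lemma cov_e e e' L : covers PS PL e e' -> J e' -> (e' <= L)%O -> ~ J L ->
  covers B BL (Some (e, L)) (Some (e', L)).
Proof.
case=> h1 h2 _ hc Je' hL nL; split.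
- apply/(@BLc PS e' L e L Logic.I Logic.I hL); split; [exact: h1|exact: lexx].
- by case.
- by split.
- case=> [[a b]|] //= [_ _ hab Ja nb].
  move=> /(@BLc PS a b e L Logic.I Logic.I hab) [h3 h4].
  move=> /(@BLc PS e' L a b Logic.I Logic.I hL) [h5 h6].
  have Eb : b = L by apply/le_anti; rewrite h4 h6.
  by case: (hc a Logic.I h3 h5) => ->; [left|right]; rewrite Eb.
Qed.

Lemma cov_f x L0 L : covers PS PL L0 L -> J x -> (x <= L0)%O -> ~ J L0 ->
  covers B BL (Some (x, L)) (Some (x, L0)).
Proof.
case=> h1 h2 _ hc Jx hL nL; split.
- apply/(@BLc PS x L0 x L Logic.I Logic.I hL); split; [exact: lexx|exact: h1].
- by case => E; apply: h2.
- by split.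
- case=> [[a b]|] //= [_ _ hab Ja nb].
  move=> /(@BLc PS a b x L Logic.I Logic.I hab) [h3 h4].
  move=> /(@BLc PS x L0 a b Logic.I Logic.I hL) [h5 h6].
  have Ea : a = x by apply/le_anti; rewrite h3 h5.
  by case: (hc b Logic.I h6 h4) => ->; [right|left]; rewrite Ea.
Qed.

Lemma cov_top x y : covers PS PL x y -> J x -> ~ J y -> covers B BL (Some (x, y)) None.
Proof.
case=> h1 h2 _ hc Jx ny; split => //.
case=> [[a b]|]; last by right.
move=> /= [_ _ hab Ja nb] /(@BLc PS a b x y Logic.I Logic.I hab) [h3 h4] _.
left.
have Ea : a = x.
  case: (hc a Logic.I h3 (le_trans hab h4)) => // Ea.
  by exfalso; apply: ny; rewrite -Ea.
have Eb : b = y.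
  case: (hc b Logic.I (le_trans h3 hab) h4) => // Eb.
  by exfalso; apply: nb; rewrite Eb.
by rewrite Ea Eb.
Qed.

Lemma covB_top a b : covers B BL (Some (a, b)) None -> B (Some (a, b)) ->
  covers PS PL a b.
Proof.
move=> [_ _ _ hc] [_ _ hab Ja nb]; split => //.
  by move=> E; apply: nb; rewrite -E.
move=> z _ h1 h2.
case: (classic (J z)) => Jz.
  have HB : B (Some (z, b)) by split.
  have HL : BL (Some (a, b)) (Some (z, b)).
    apply/(@BLc PS z b _ _ Logic.I Logic.I h2); split => //; exact: lexx.
  by case: (hc _ HB HL Logic.I) => // [[->]]; left.
have HB : B (Some (a, z)) by split.
have HL : BL (Some (a, b)) (Some (a, z)).
  apply/(@BLc PS a z _ _ Logic.I Logic.I h1); split => //; exact: lexx.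
by case: (hc _ HB HL Logic.I) => // [[->]]; right.
Qed.

Lemma covB_some a b c e : covers B BL (Some (a, b)) (Some (c, e)) -> B (Some (a, b)) ->
  (a = c /\ covers PS PL e b) \/ (b = e /\ covers PS PL a c).
Proof.
move=> [Hle Hne [_ _ hce Jc ne] hc] [_ _ hab Ja nb].
have [hac heb] := (@BLc PS c e a b Logic.I Logic.I hce).1 Hle.
case: (eqVneq a c) => [Eac|Nac].
  left; split => //; split => //.
  - by move=> Eeb; apply: Hne; rewrite Eac Eeb.
  - move=> z _ h1 h2.
    have hz : (a <= z)%O by apply: le_trans hac (le_trans hce h1).
    have HB : B (Some (a, z)).
      by split => // Jz; apply: ne; exact: Idown h1 Jz.
    have HL1 : BL (Some (a, b)) (Some (a, z)).
      apply/(@BLc PS a z _ _ Logic.I Logic.I hz); split => //; exact: lexx.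
    have HL2 : BL (Some (a, z)) (Some (c, e)).
      apply/(@BLc PS c e _ _ Logic.I Logic.I hce); split => //.
    by case: (hc _ HB HL1 HL2) => [[->]|[_ ->]]; [right|left].
case: (eqVneq b e) => [Ebe|Nbe].
  right; split => //; split => //.
  - by apply/eqP.
  - move=> z _ h1 h2.
    have HB : B (Some (z, b)).
      split => //; last exact: Idown h2 Jc.
      by apply: le_trans h2 (le_trans hce heb).
    have HL1 : BL (Some (a, b)) (Some (z, b)).
      apply/(@BLc PS z b _ _ Logic.I Logic.I (le_trans h2 (le_trans hce heb))); split => //; exact: lexx.
    have HL2 : BL (Some (z, b)) (Some (c, e)).
      apply/(@BLc PS c e _ _ Logic.I Logic.I hce); split => //; rewrite Ebe.
    by case: (hc _ HB HL1 HL2) => [[->]|[->]]; [left|right].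
exfalso.
have hcb : (c <= b)%O by apply: le_trans hce heb.
have HB : B (Some (c, b)) by split.
have HL1 : BL (Some (a, b)) (Some (c, b)).
  apply/(@BLc PS c b _ _ Logic.I Logic.I hcb); split => //; exact: lexx.
have HL2 : BL (Some (c, b)) (Some (c, e)).
  apply/(@BLc PS c e _ _ Logic.I Logic.I hce); split => //; exact: lexx.
case: (hc _ HB HL1 HL2) => [[E]|[E]].
  by rewrite E eqxx in Nac.
by rewrite E eqxx in Nbe.
Qed.

Lemma None_chain s : chain_from B BL None s -> s = [::].
Proof.
case: s => // o s /= [H1 H2 _ _]; case: o H1 H2 => [[a b]|] //= _ H; by case: H.
Qed.

Lemma P_last x s w : chain_from PS PL x s -> inseq w (x :: s) -> (w <= last x s)%O.
Proof. move=> h hw; exact: (chain_last PL_tr PL_rf Logic.I h hw). Qed.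

Lemma consE L e0 es : ~ J L -> J (last e0 es) -> (last e0 es <= L)%O -> cpath PS PL e0 es ->
  cpath B BL (Some (e0, L)) [seq Some (e, L) | e <- es].
Proof.
elim: es e0 => [|e1 es IH] e0 //= nL Jl hl [hc hp]; split; last exact: IH.
have h : (e1 <= last e1 es)%O := P_last (cpath_chain hp) (or_introl erefl).
apply: cov_e => //; [exact: Idown h Jl | exact: le_trans h hl].
Qed.

Lemma cons_full fs e0 es y : cpath PS PL e0 es -> cpath PS PL y fs -> J (last e0 es) ->
  ~ J y -> (last e0 es <= y)%O ->
  exists t, [/\ cpath B BL (Some (e0, last y fs)) t, size t = size es + size fs &
     last (Some (e0, last y fs)) t = Some (last e0 es, y)].
Proof.
elim/last_ind: fs e0 es y => [|fs z IH] e0 es y Hes Hfs Jx ny hxy.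
  exists [seq Some (e, y) | e <- es]; split => /=.
  - exact: consE.
  - by rewrite size_map addn0.
  - by rewrite (last_map (fun e => Some (e, y))).
move/cpath_rcons: Hfs => [Hfs Hcov]; rewrite last_rcons.
set L0 := last y fs in Hcov *.
have hyL0 : (y <= L0)%O := P_last (cpath_chain Hfs) (or_introl erefl).
have nL0 : ~ J L0 by move=> h; apply: ny; exact: Idown hyL0 h.
have hL0z : (L0 <= z)%O by case: Hcov.
have [t0 [H1 H2 H3]] := IH (last e0 es) [::] y Logic.I Hfs Jx ny hxy.
exists ([seq Some (e, z) | e <- es] ++ Some (last e0 es, L0) :: t0); split.
- apply/cpath_cat; split.
    apply: consE => //; last exact: le_trans hxy (le_trans hyL0 hL0z).
    by move=> h; apply: nL0; exact: Idown hL0z h.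
  rewrite (last_map (fun e => Some (e, z))) /=; split => //.
  apply: cov_f => //; exact: le_trans hxy hyL0.
- rewrite size_cat size_map /= H2 size_rcons /=; lia.
- by rewrite last_cat (last_map (fun e => Some (e, z))) /= H3.
Qed.

Lemma split_I x s : J x -> ~ J (last x s) ->
  exists es y fs, [/\ s = es ++ y :: fs, J (last x es) & ~ J y].
Proof.
elim: s x => [|c s IH] x /= Jx nl; first by exfalso; exact: nl Jx.
case: (classic (J c)) => Jc.
  have [es [y [fs [E h1 h2]]]] := IH c Jc nl.
  by exists (c :: es), y, fs; split => //; rewrite E.
by exists [::], c, s; split.
Qed.

Lemma toBier s : cpath PS PL bt s -> last bt s = tp ->
  exists t, [/\ cpath B BL (Some (bt, tp)) t, last (Some (bt, tp)) t = None & size t = size s].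
Proof.
move=> Hp Hl.
have [es [y [fs [E Jx ny]]]] : exists es y fs, [/\ s = es ++ y :: fs, J (last bt es) & ~ J y].
  by apply: split_I; [exact: I0 | rewrite Hl; exact: nI1].
rewrite E in Hp Hl *; move/cpath_cat: Hp => [Hes /= [Hcov Hfs]].
have hxy : (last bt es <= y)%O by case: Hcov.
have [t0 [H1 H2 H3]] := cons_full Hes Hfs Jx ny hxy.
rewrite last_cat /= in Hl; rewrite Hl in H1 H3.
exists (rcons t0 None); split.
- apply/cpath_rcons; split => //; rewrite H3; exact: cov_top.
- by rewrite last_rcons.
- by rewrite size_rcons H2 size_cat /=; lia.
Qed.

Lemma toP s a b c c' : cpath B BL (Some (a, b)) s -> last (Some (a, b)) s = None ->
  B (Some (a, b)) -> cpath PS PL bt c -> last bt c = a -> cpath PS PL b c' -> last b c' = tp ->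
  exists u, [/\ cpath PS PL bt u, last bt u = tp & size u = size c + size c' + size s].
Proof.
elim: s a b c c' => [|o s IH] a b c c' //= [Hcov Hs] Hl HB Hc Hlc Hc' Hlc'.
case: o Hcov Hs Hl => [[p q]|] Hcov Hs Hl.
- have HB' : B (Some (p, q)) by case: Hcov.
  case: (covB_some Hcov HB) => [[Ea Hq]|[Eb Hp]].
  + have Hc'' : cpath PS PL q (b :: c') by split.
    have Hlc2 : last bt c = p by rewrite Hlc.
    have [u [U1 U2 U3]] := IH p q c (b :: c') Hs Hl HB' Hc Hlc2 Hc'' Hlc'.
    by exists u; split => //; rewrite U3 /=; lia.
  + have Hc'' : cpath PS PL bt (rcons c p) by apply/cpath_rcons; split => //; rewrite Hlc.
    have L1 : last bt (rcons c p) = p by rewrite last_rcons.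
    have L2 : cpath PS PL q c' by rewrite -Eb.
    have L3 : last q c' = tp by rewrite -Eb.
    have [u [U1 U2 U3]] := IH p q (rcons c p) c' Hs Hl HB' Hc'' L1 L2 L3.
    by exists u; split => //; rewrite U3 size_rcons; lia.
- have Es : s = [::] := None_chain (cpath_chain Hs).
  subst s.
  have Hab := covB_top Hcov HB.
  exists (c ++ b :: c'); split.
  + by apply/cpath_cat; split => //; rewrite Hlc /=; split.
  + by rewrite last_cat /=.
  + by rewrite size_cat /=; lia.
Qed.

Lemma BND s a b p c c' : chain_from B BL (Some (a, b)) s -> B (Some (a, b)) ->
  chain_from PS PL p c -> last p c = a -> chain_from PS PL b c' ->
  (exists a' b' p' e e', [/\ last (Some (a, b)) s = Some (a', b'), chain_from PS PL p' e,
     last p' e = a', chain_from PS PL b' e' & size c + size c' + size s <= size e + size e'])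
  \/ (last (Some (a, b)) s = None /\
      exists p' e, chain_from PS PL p' e /\ size c + size c' + size s <= size e).
Proof.
elim: s a b p c c' => [|o s IH] a b p c c' /= Hs HB Hc Hlc Hc'.
  by left; exists a, b, p, c, c'; split => //; rewrite addn0.
case: Hs => Hle Hne HBo Hs.
case: HB => _ _ hab Ja nb.
case: o Hle Hne HBo Hs => [[q r]|] Hle Hne HBo Hs; last first.
  have Es := None_chain Hs; subst s.
  right; split => //.
  exists p, (c ++ b :: c'); split.
    apply/chain_cat; split => //; rewrite Hlc /=; split => //.
    by move=> E; apply: nb; rewrite -E.
  by rewrite size_cat /=; lia.
have hqr : (q <= r)%O by case: HBo.
have [haq hrb] := (@BLc PS q r a b Logic.I Logic.I hqr).1 Hle.
have [c1 [Hc1 Hl1 Hs1]] : exists c1, [/\ chain_from PS PL p c1, last p c1 = q &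
    size c + (a != q) <= size c1].
  case: (eqVneq a q) => [E|N].
    by exists c; rewrite addn0; split => //; rewrite Hlc.
  exists (rcons c q); split.
  - by apply/chain_rcons; split => //; rewrite Hlc; split => //; apply/eqP.
  - by rewrite last_rcons.
  - by rewrite size_rcons addn1.
have [c2 [Hc2 Hs2]] : exists c2, chain_from PS PL r c2 /\ size c' + (r != b) <= size c2.
  case: (eqVneq r b) => [E|N].
    by exists c'; rewrite addn0 E; split.
  exists (b :: c'); split; last by rewrite /= addn1.
  by split => //; apply/eqP.
have H1 : 1 <= (a != q) + (r != b).
  move: Hne; case: eqP => [->|_]; case: eqP => [->|_] //= Hne.
case: (IH q r p c1 c2 Hs HBo Hc1 Hl1 Hc2) =>
  [[a' [b' [p' [e [e' [E1 h1 h2 h3 h4]]]]]]|[E1 [p' [e [h1 h2]]]]].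
  by left; exists a', b', p', e, e'; split => //; lia.
by right; split => //; exists p', e; split => //; lia.
Qed.

Lemma low_chain z r : rank_is PS PL z r ->
  exists g, [/\ cpath PS PL bt g, last bt g = z & size g = r].
Proof.
case=> [[p [g [[Sp Hc] Hs]]] Hb].
have Hlz : (last p g <= z)%O by have [_ h] := last_S Sp Hc.
have El : last p g = z.
  apply: NNPP => hne.
  have : is_chain (fun w => PS w /\ PL w z) PL p (rcons g z).
    split => //; apply/chain_rcons; split => //; split => //.
    by split => //; exact: lexx.
  by move/Hb; rewrite size_rcons Hs ltnn.
have Ep : p = bt.
  apply: NNPP => hne.
  have : is_chain (fun w => PS w /\ PL w z) PL bt (p :: g).
    split; first by split => //; exact: le0x.
    split => //; [exact: le0x | by move/esym].
  by move/Hb; rewrite /= Hs ltnn.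
have HcP : chain_from PS PL p g := chain_sub Hc (fun _ _ => Logic.I).
have Hcp : cpath PS PL p g.
  apply: NNPP => hn.
  have [g' [h1 [h2 h3]]] := ins HcP hn.
  have : is_chain (fun w => PS w /\ PL w z) PL p g'.
    split => //; apply: (chain_sub h1) => w hw; split => //.
    by rewrite -El -h3; exact: P_last h1 (or_intror hw).
  by move/Hb; rewrite h2 Hs ltnn.
by exists g; split => //; rewrite -Ep.
Qed.

Lemma longest_max n : has_length PS PL n ->
  exists s, [/\ cpath PS PL bt s, last bt s = tp & size s = n].
Proof.
case=> [[x [s [[_ Hc] Hs]]] Hb].
have El : last x s = tp.
  apply: NNPP => hne.
  have : is_chain PS PL x (rcons s tp).
    split => //; apply/chain_rcons; split => //; split => //; exact: lex1.
  by move/Hb; rewrite size_rcons Hs ltnn.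
have Ex : x = bt.
  apply: NNPP => hne.
  have : is_chain PS PL bt (x :: s).
    split => //; split => //; [exact: le0x | by move/esym].
  by move/Hb; rewrite /= Hs ltnn.
have Hcp : cpath PS PL x s.
  apply: NNPP => hn.
  have [s' [h1 [h2 h3]]] := ins Hc hn.
  have : is_chain PS PL x s' by split.
  by move/Hb; rewrite h2 Hs ltnn.
by exists s; split => //; rewrite -Ex.
Qed.

Lemma P_max_of x s : cpath PS PL x s -> x = bt -> last x s = tp -> maximal_chain PS PL x s.
Proof.
apply: (max_of PL_tr PL_rf PL_an (bt:=bt) (tp:=tp)) => //.
- by move=> z _; exact: le0x.
- by move=> z _; exact: lex1.
Qed.

Lemma up_chain n y ry : graded PS PL -> has_length PS PL n -> rank_is PS PL y ry ->
  exists fs, [/\ cpath PS PL y fs, last y fs = tp & ry + size fs = n].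
Proof.
move=> [_ Hg] Hn Hr.
have [g [Hg1 Hg2 Hg3]] := low_chain Hr.
have Hbn := Hn.2.
have P0 : exists t, chain_from PS PL y t /\ size t = 0 by exists [::].
have Pb : forall k, (exists t, chain_from PS PL y t /\ size t = k) -> k <= n.
  by move=> k [t [h <-]]; exact: Hbn y t (conj Logic.I h).
have [j [[t [Ht Hts]] Hmax]] := nat_max P0 Pb.
have Hl : last y t = tp.
  apply: NNPP => hne.
  have : j.+1 <= j.
    apply: Hmax; exists (rcons t tp); rewrite size_rcons Hts; split => //.
    apply/chain_rcons; split => //; split => //; exact: lex1.
  by rewrite ltnn.
have Hcp : cpath PS PL y t.
  apply: NNPP => hn.
  have [t' [h1 [h2 h3]]] := ins Ht hn.
  have : j.+1 <= j by apply: Hmax; exists t'; rewrite h2 Hts.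
  by rewrite ltnn.
have Hm1 : maximal_chain PS PL bt (g ++ t).
  apply: P_max_of => //; last by rewrite last_cat Hg2.
  by apply/cpath_cat; split => //; rewrite Hg2.
have [s [Hs1 Hs2 Hs3]] := longest_max Hn.
have Hm2 := P_max_of Hs1 erefl Hs2.
have := Hg _ _ _ _ Hm1 Hm2; rewrite size_cat Hg3 Hs3 Hts => E.
by exists t; split => //; rewrite Hts.
Qed.

Lemma B_max_of x s : cpath B BL x s -> x = Some (bt, tp) -> last x s = None -> maximal_chain B BL x s.
Proof.
apply: (max_of BL_tr BL_rf BL_an (bt:=Some (bt, tp)) (tp:=None)).
- exact: B_bot.
- exact: BL_bot.
- exact: BL_top.
Qed.

Lemma B_bound n o s : has_length PS PL n -> is_chain B BL o s -> size s <= n.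
Proof.
move=> Hn [Bo Hc].
case: o Bo Hc => [[a b]|] Bo Hc; last by rewrite (None_chain Hc).
have H0 : chain_from PS PL a [::] by [].
have H0' : chain_from PS PL b [::] by [].
case: (BND Hc Bo H0 (erefl a) H0') =>
  [[a' [b' [p' [e [e' [E1 h1 h2 h3 h4]]]]]]|[E1 [p' [e [h1 h2]]]]].
- have : B (Some (a', b')) by rewrite -E1; exact: last_S Bo Hc.
  case=> _ _ hab Ja nb.
  have Hce : chain_from PS PL p' (e ++ b' :: e').
    apply/chain_cat; split => //; rewrite h2 /=; split => //.
    by move=> E; apply: nb; rewrite -E.
  have := Hn.2 p' _ (conj Logic.I Hce); rewrite size_cat /= => hh.
  move: h4 => /=; lia.
- have := Hn.2 p' e (conj Logic.I h1); move: h2 => /=; lia.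
Qed.

Lemma part1 : finite_length PS PL ->
  exists n, has_length PS PL n /\ has_length B BL n.
Proof.
case=> N HN.
have P0 : exists x s, is_chain PS PL x s /\ size s = 0 by exists bt, [::].
have Pb : forall k, (exists x s, is_chain PS PL x s /\ size s = k) -> k <= N.
  by move=> k [x [s [h <-]]]; exact: HN x s h.
have [n [[x [s [Hc Hs]]] Hmax]] := nat_max P0 Pb.
have Hn : has_length PS PL n.
  split; first by exists x, s.
  by move=> y t h; apply: Hmax; exists y, t.
exists n; split => //; split; last by move=> o t h; exact: B_bound Hn h.
have [s1 [S1 S2 S3]] := longest_max Hn.
have [t [T1 T2 T3]] := toBier S1 S2.
exists (Some (bt, tp)), t; split; last by rewrite T3.
split; [exact: B_bot | exact: cpath_chain T1].
Qed.

Lemma part2 : graded B BL <-> graded PS PL.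
Proof.
split.
- move=> [_ HgB]; split.
    split; first by exists bt; split => // z _; exact: le0x.
    by exists tp; split => // z _; exact: lex1.
  move=> x s y t Mx My.
  have Hx := max_cov PL_tr PL_rf PL_an Mx.
  have Ex := max_bot PL_tr PL_an (bt:=bt) Logic.I (fun z _ => le0x z) Mx.
  have Lx := max_top PL_tr PL_rf PL_an (tp:=tp) Logic.I (fun z _ => lex1 z) Mx.
  have Hy := max_cov PL_tr PL_rf PL_an My.
  have Ey := max_bot PL_tr PL_an (bt:=bt) Logic.I (fun z _ => le0x z) My.
  have Ly := max_top PL_tr PL_rf PL_an (tp:=tp) Logic.I (fun z _ => lex1 z) My.
  subst x y.
  have [t1 [A1 A2 A3]] := toBier Hx Lx.
  have [t2 [B1 B2 B3]] := toBier Hy Ly.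
  rewrite -A3 -B3; exact: HgB _ _ _ _ (B_max_of A1 erefl A2) (B_max_of B1 erefl B2).
- move=> [_ HgP]; split.
    split; [exists (Some (bt, tp)); split; [exact: B_bot|exact: BL_bot]
           | exists None; split => //; exact: BL_top].
  move=> x s y t Mx My.
  have Hx := max_cov BL_tr BL_rf BL_an Mx.
  have Ex := max_bot BL_tr BL_an (bt:=Some (bt, tp)) B_bot BL_bot Mx.
  have Lx := max_top BL_tr BL_rf BL_an (tp:=None) Logic.I BL_top Mx.
  have Hy := max_cov BL_tr BL_rf BL_an My.
  have Ey := max_bot BL_tr BL_an (bt:=Some (bt, tp)) B_bot BL_bot My.
  have Ly := max_top BL_tr BL_rf BL_an (tp:=None) Logic.I BL_top My.
  subst x y.
  have C0 : cpath PS PL bt [::] by [].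
  have C1 : cpath PS PL tp [::] by [].
  have [u1 [U1 U2 U3]] := toP Hx Lx B_bot C0 (erefl bt) C1 (erefl tp).
  have [u2 [V1 V2 V3]] := toP Hy Ly B_bot C0 (erefl bt) C1 (erefl tp).
  have := HgP _ _ _ _ (P_max_of U1 erefl U2) (P_max_of V1 erefl V2).
  by rewrite U3 V3.
Qed.

Lemma part_rank n x y rx ry : has_length PS PL n -> graded PS PL ->
  B (Some (x, y)) -> rank_is PS PL x rx -> rank_is PS PL y ry ->
  rank_is B BL (Some (x, y)) (rx + (n - ry)).
Proof.
move=> Hn Hg HB Hrx Hry.
have HB' := HB; case: HB' => _ _ hxy Jx ny.
have [g [Hg1 Hg2 Hg3]] := low_chain Hry.
split.
- have [g1 [G1 G2 G3]] := low_chain Hrx.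
  have [fs [Hf1 Hf2 Hf3]] := up_chain Hg Hn Hry.
  have Jl : J (last bt g1) by rewrite G2.
  have hl : (last bt g1 <= y)%O by rewrite G2.
  have [t [Ht1 Ht2 Ht3]] := cons_full G1 Hf1 Jl ny hl.
  rewrite G2 in Ht3; rewrite Hf2 in Ht1 Ht3.
  exists (Some (bt, tp)), t; split; last by rewrite Ht2 G3; lia.
  have Hct := cpath_chain Ht1.
  have Hle : forall w, inseq w (Some (bt, tp) :: t) -> BL w (Some (x, y)).
    by move=> w hw; rewrite -Ht3; exact: (chain_last (@BL_tr) (@BL_rf) B_bot Hct hw).
  split; first by split; [exact: B_bot | apply: Hle; left].
  apply: (chain_sub Hct) => w hw; split.
    exact: (chain_S Hct hw).
  by apply: Hle; right.
- move=> o s [[Bo Lo] Hc].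
  case: o Bo Lo Hc => [[a b]|] Bo Lo Hc; last by [].
  have HcB : chain_from B BL (Some (a, b)) s.
    by apply: (chain_sub Hc) => w hw; case: (chain_S Hc hw).
  have H0 : chain_from PS PL a [::] by [].
  have H0' : chain_from PS PL b [::] by [].
  have Hl := last_S (conj Bo Lo) Hc.
  case: (BND HcB Bo H0 (erefl a) H0') =>
    [[a' [b' [p' [e [e' [E1 h1 h2 h3 h4]]]]]]|[E1 _]]; last by rewrite E1 in Hl; case: Hl.
  rewrite E1 in Hl; case: Hl => [[_ _ hab' _ _] Ll].
  have [hax hyb] := (@BLc PS x y a' b' Logic.I Logic.I hxy).1 Ll.
  have He : size e <= rx.
    apply: (proj2 Hrx p' e); split.
      by split => //; apply: le_trans hax; rewrite -h2; exact: P_last h1 (or_introl erefl).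
    apply: (chain_sub h1) => w hw; split => //.
    by apply: le_trans hax; rewrite -h2; exact: P_last h1 (or_intror hw).
  have [f [Hf Hfs]] : exists f, chain_from PS PL y f /\ size e' <= size f.
    case: (eqVneq y b') => [->|N]; first by exists e'.
    exists (b' :: e'); split => //=; split => //; exact/eqP.
  have Hcg : chain_from PS PL bt (g ++ f).
    by apply/chain_cat; split; [exact: cpath_chain Hg1 | rewrite Hg2].
  have := Hn.2 bt _ (conj Logic.I Hcg); rewrite size_cat => hh.
  move: h4 => /=; lia.
Qed.

Lemma part_iso1 x y : B (Some (x, y)) ->
  poset_iso (itv B BL (Some (x, y)) None) BL
    (BierS (itv PS PL x y) PL (fun z => J z /\ itv PS PL x y z))
    (BierLe (itv PS PL x y) PL).
Proof.
case=> _ _ hxy Jx ny.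
exists id, id; split => //.
- case=> [[a b]|] [Bo Lo _] //=.
  case: Bo => _ _ hab Ja nb.
  have [hxa hby] := (@BLc PS a b x y Logic.I Logic.I hab).1 Lo.
  have Ia : itv PS PL x y a by split => //; exact: le_trans hab hby.
  have Ib : itv PS PL x y b by split => //; exact: le_trans hxa hab.
  by split => // [[]].
- case=> [[a b]|] Ho; last by split.
  case: Ho => [[_ hxa hay] [_ hxb hby] hab [Ja _] nb].
  split => //.
    split => // Jb; apply: nb; split => //.
  apply/(@BLc PS a b x y Logic.I Logic.I hab); by split.
- case=> [[a1 b1]|] [[a2 b2]|] H1 H2 //=.
  have Ha := H2; case: Ha => [[_ _ hab _ _] _ _].
  have [Ia _] : itv PS PL x y a2 /\ itv PS PL x y b2.
    case: H2 => _ Lo _.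
    have [hxa hby] := (@BLc PS a2 b2 x y Logic.I Logic.I hab).1 Lo.
    by split; split => //; [exact: le_trans hab hby | exact: le_trans hxa hab].
  have Ib : itv PS PL x y b2.
    case: H2 => _ Lo _.
    have [hxa hby] := (@BLc PS a2 b2 x y Logic.I Logic.I hab).1 Lo.
    by split => //; exact: le_trans hxa hab.
  etransitivity; first exact: (@BLc PS a2 b2 a1 b1 Logic.I Logic.I hab).
  symmetry; exact: (@BLc (itv PS PL x y) a2 b2 a1 b1 Ia Ib hab).
Qed.

Lemma part_iso2 x' y' x y : B (Some (x', y')) -> B (Some (x, y)) ->
  BL (Some (x', y')) (Some (x, y)) ->
  poset_iso (itv B BL (Some (x', y')) (Some (x, y))) BL (prodS x' x y y') (@prodOpLe d T).
Proof.
case=> _ _ hxy' Jx' ny'; case=> _ _ hxy Jx ny _.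
exists (fun o => if o is Some p then p else (x, y)), (fun p => Some p); split.
- case=> [[a b]|] [Bo Lo Lh] //=.
  case: Bo => _ _ hab Ja nb.
  have [h1 h2] := (@BLc PS a b x' y' Logic.I Logic.I hab).1 Lo.
  have [h3 h4] := (@BLc PS x y a b Logic.I Logic.I hxy).1 Lh.
  by split; split.
- move=> [a b] [[_ hx'a hax] [_ hyb hby']] /=.
  have hab : (a <= b)%O by apply: le_trans hax (le_trans hxy hyb).
  split.
  + split => //; first exact: Idown hax Jx.
    by move=> Jb; apply: ny; exact: Idown hyb Jb.
  + apply/(@BLc PS a b x' y' Logic.I Logic.I hab); by split.
  + apply/(@BLc PS x y a b Logic.I Logic.I hxy); by split.
- by case=> [[a b]|] [_ _ Lh].
- by case.
- case=> [[a1 b1]|] [[a2 b2]|] [_ _ H1] [B2 _ H2] //=.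
  case: B2 => _ _ hab _ _.
  exact: (@BLc PS a2 b2 a1 b1 Logic.I Logic.I hab).
Qed.

Lemma part_lat : is_lattice PS PL -> is_lattice B BL.
Proof.
move=> Hlat o1 o2 B1 B2.
case: o1 B1 => [[a1 b1]|] B1; last first.
  split.
    exists None; split; [done | done | exact: BL_top | by move=> u _ h _].
  exists o2; split; [done | exact: BL_top | exact: BL_rf | by move=> u _ _ h].
case: o2 B2 => [[a2 b2]|] B2; last first.
  split.
    exists None; split; [done | exact: BL_top | done | by move=> u _ _ h].
  exists (Some (a1, b1)); split; [done | exact: BL_rf | exact: BL_top | by move=> u _ h _].
have B1' := B1; have B2' := B2.
case: B1' => _ _ h1 J1 n1; case: B2' => _ _ h2 J2 n2.
have [[j1 [_ ja1 ja2 jl]] [m1 [_ ma1 ma2 ml]]] := Hlat a1 a2 Logic.I Logic.I.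
have [[j2 [_ jb1 jb2 jl2]] [m2 [_ mb1 mb2 ml2]]] := Hlat b1 b2 Logic.I Logic.I.
split.
- case: (classic [/\ J j1, ~ J m2 & (j1 <= m2)%O]) => [[Jj nm hjm]|Hn].
    exists (Some (j1, m2)); split.
    + by split.
    + apply/(@BLc PS j1 m2 a1 b1 Logic.I Logic.I hjm); by split.
    + apply/(@BLc PS j1 m2 a2 b2 Logic.I Logic.I hjm); by split.
    + case=> [[c e]|] Bu L1 L2 //.
      case: Bu => _ _ hce _ _.
      have [hc1 he1] := (@BLc PS c e a1 b1 Logic.I Logic.I hce).1 L1.
      have [hc2 he2] := (@BLc PS c e a2 b2 Logic.I Logic.I hce).1 L2.
      apply/(@BLc PS c e j1 m2 Logic.I Logic.I hce); split.
        exact: jl.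
      exact: ml2.
  exists None; split => //.
  case=> [[c e]|] Bu L1 L2 //.
  exfalso; apply: Hn.
  case: Bu => _ _ hce Jc ne.
  have [hc1 he1] := (@BLc PS c e a1 b1 Logic.I Logic.I hce).1 L1.
  have [hc2 he2] := (@BLc PS c e a2 b2 Logic.I Logic.I hce).1 L2.
  have hj : (j1 <= c)%O by exact: jl.
  have hm : (e <= m2)%O by exact: ml2.
  split.
  + exact: Idown hj Jc.
  + by move=> Jm; apply: ne; exact: Idown hm Jm.
  + exact: le_trans hj (le_trans hce hm).
- have hmj : (m1 <= j2)%O by apply: le_trans ma1 (le_trans h1 jb1).
  exists (Some (m1, j2)); split.
  + split => //; first exact: Idown ma1 J1.
    by move=> Jj; apply: n1; exact: Idown jb1 Jj.
  + apply/(@BLc PS a1 b1 m1 j2 Logic.I Logic.I h1); by split.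
  + apply/(@BLc PS a2 b2 m1 j2 Logic.I Logic.I h2); by split.
  + case=> [[c e]|] Bu L1 L2 //.
    have [hc1 he1] := (@BLc PS a1 b1 c e Logic.I Logic.I h1).1 L1.
    have [hc2 he2] := (@BLc PS a2 b2 c e Logic.I Logic.I h2).1 L2.
    apply/(@BLc PS m1 j2 c e Logic.I Logic.I hmj); split.
      exact: ml.
    exact: jl2.
Qed.

End Bier.

Theorem lemma1 (d : Order.disp_t) (T : tbPOrderType d) (I : T -> Prop) :
  finite_length (@PT d T) (@PLe d T) ->
  proper_ideal (@PT d T) (@PLe d T) I ->
  (* (i) same length *)
  (exists n, has_length (@PT d T) (@PLe d T) n /\
             has_length (BierS (@PT d T) (@PLe d T) I) (BierLe (@PT d T) (@PLe d T)) n) /\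
  (* (ii) gradedness and rank formula *)
  (graded (BierS (@PT d T) (@PLe d T) I) (BierLe (@PT d T) (@PLe d T)) <->
   graded (@PT d T) (@PLe d T)) /\
  (forall n, has_length (@PT d T) (@PLe d T) n -> graded (@PT d T) (@PLe d T) ->
   forall x y : T, BierS (@PT d T) (@PLe d T) I (Some (x, y)) ->
   forall rx ry, rank_is (@PT d T) (@PLe d T) x rx -> rank_is (@PT d T) (@PLe d T) y ry ->
   rank_is (BierS (@PT d T) (@PLe d T) I) (BierLe (@PT d T) (@PLe d T))
           (Some (x, y)) (rx + (n - ry))) /\
  (* (iii) upper intervals *)
  (forall x y : T, BierS (@PT d T) (@PLe d T) I (Some (x, y)) ->
   poset_iso
     (itv (BierS (@PT d T) (@PLe d T) I) (BierLe (@PT d T) (@PLe d T)) (Some (x, y)) None)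
     (BierLe (@PT d T) (@PLe d T))
     (BierS (itv (@PT d T) (@PLe d T) x y) (@PLe d T)
            (fun z => I z /\ itv (@PT d T) (@PLe d T) x y z))
     (BierLe (itv (@PT d T) (@PLe d T) x y) (@PLe d T))) /\
  (* (iii) intervals below a proper element *)
  (forall x' y' x y : T,
   BierS (@PT d T) (@PLe d T) I (Some (x', y')) ->
   BierS (@PT d T) (@PLe d T) I (Some (x, y)) ->
   BierLe (@PT d T) (@PLe d T) (Some (x', y')) (Some (x, y)) ->
   poset_iso
     (itv (BierS (@PT d T) (@PLe d T) I) (BierLe (@PT d T) (@PLe d T))
          (Some (x', y')) (Some (x, y)))
     (BierLe (@PT d T) (@PLe d T))
     (prodS x' x y y') (@prodOpLe d T)) /\
  (* (iv) lattice *)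
  (is_lattice (@PT d T) (@PLe d T) ->
   is_lattice (BierS (@PT d T) (@PLe d T) I) (BierLe (@PT d T) (@PLe d T))).
Proof.
move=> Hf HI.
split; first exact: (part1 HI Hf).
split; first exact: (part2 HI).
split.
  move=> n Hn Hg x y HB rx ry Hrx Hry; exact: (part_rank HI Hn Hg HB Hrx Hry).
split; first by move=> x y HB; apply: part_iso1.
split; first by move=> x' y' x y H1 H2 H3; apply: part_iso2.
by move=> Hl; apply: part_lat.
Qed.
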